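(* Let $\pi_1$ be a positive probability density on $\mathbb{R}$ with $\log\pi_1\in C^1(\mathbb{R})$ and suppose that for some $q\in[0,1)$, $\left|\frac{d}{dx_1}\log\pi_1(x_1)\right|=\Theta(|x_1|^q)$ as $|x_1|\to\infty$. Let $X_1\sim\pi_1$ and fix $k\ge0$. Then there exists $\gamma\in(0,\infty)$ such that $\mathbb{P}(|X_1|>k+h)\le\Theta\big(e^{-\gamma h^{1+q}-q\log h}\big)$ as $h\to\infty$, i.e. $\limsup_{h\to\infty}\mathbb{P}(|X_1|>k+h)\,e^{\gamma h^{1+q}+q\log h}<\infty$.
   Context: $F=\Theta(G)$ as $|x_1|\to\infty$ means $\liminf F/G>0$ and $\limsup F/G<\infty$. *)

(* Defs.v *)
From Stdlib Require Import Reals.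
From Coquelicot Require Import Coquelicot.
Open Scope R_scope.

Definition is_prob_density (pi : R -> R) : Prop :=
  is_RInt_gen pi (Rbar_locally m_infty) (Rbar_locally p_infty) 1.

(* P(|X| > t) for X ~ pi, t >= 0: the two tail integrals. *)
Definition abs_tail_prob (pi : R -> R) (t : R) : R :=
  RInt_gen pi (at_point t) (Rbar_locally p_infty)
  + RInt_gen pi (Rbar_locally m_infty) (at_point (- t)).

(* Main.v *)
Require Import Defs.
From Stdlib Require Import Reals Lra.
From Coquelicot Require Import Coquelicot.
Open Scope R_scope.

Lemma exRI (f : R -> R) (Hc : forall x, continuous f x) a b : ex_RInt f a b.
Proof. apply (@ex_RInt_continuous R_CompleteNormedModule); intros; apply Hc. Qed.

Lemma full_small (f : R -> R) (Hc : forall x, continuous f x)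
  (Hf : is_RInt_gen f (Rbar_locally m_infty) (Rbar_locally p_infty) 1) :
  forall eps, 0 < eps -> exists A B, forall a b, a < A -> B < b -> Rabs (RInt f a b - 1) < eps.
Proof.
  intros eps He.
  assert (H := Hf (ball 1 eps)).
  destruct (H (locally_ball 1 (mkposreal eps He))) as [Q R' [A HA] [B HB] HQR].
  exists A, B. intros a b Ha Hb.
  destruct (HQR a b (HA a Ha) (HB b Hb)) as [y [Hy1 Hy2]].
  simpl in Hy1. rewrite (is_RInt_unique _ _ _ _ Hy1). exact Hy2.
Qed.

Lemma chas (f : R -> R) (Hc : forall x, continuous f x) a b c :
  RInt f a b + RInt f b c = RInt f a c.
Proof. apply (@RInt_Chasles R_CompleteNormedModule); apply exRI; auto. Qed.

Lemma BND (f : R -> R) (Hc : forall x, continuous f x) (Hp : forall x, 0 < f x)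
  (Hf : is_RInt_gen f (Rbar_locally m_infty) (Rbar_locally p_infty) 1) :
  forall a b, a <= b -> RInt f a b <= 2.
Proof.
  intros a b Hab.
  destruct (full_small f Hc Hf 1 Rlt_0_1) as [A [B H]].
  set (a' := Rmin a (A - 1)). set (b' := Rmax b (B + 1)).
  assert (H1 : Rabs (RInt f a' b' - 1) < 1).
  { apply H; unfold a', b'. pose proof (Rmin_r a (A-1)); lra. pose proof (Rmax_r b (B+1)); lra. }
  rewrite <- (chas f Hc a' a b') in H1. rewrite <- (chas f Hc a b b') in H1.
  assert (0 <= RInt f a' a). { apply RInt_ge_0. apply Rmin_l. apply exRI; auto. intros; left; auto. }
  assert (0 <= RInt f b b'). { apply RInt_ge_0. apply Rmax_l. apply exRI; auto. intros; left; auto. }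
  apply Rabs_def2 in H1. lra.
Qed.

Lemma cauchyR (f : R -> R) (Hc : forall x, continuous f x)
  (Hf : is_RInt_gen f (Rbar_locally m_infty) (Rbar_locally p_infty) 1) :
  forall eps, 0 < eps -> exists N, forall u v, N < u -> N < v -> Rabs (RInt f u v) < eps.
Proof.
  intros eps He.
  destruct (full_small f Hc Hf (eps/2) ltac:(lra)) as [A [B H]].
  exists B. intros u v Hu Hv.
  pose proof (chas f Hc (A-1) u v) as E.
  pose proof (H (A-1) u ltac:(lra) Hu). pose proof (H (A-1) v ltac:(lra) Hv).
  apply Rabs_def2 in H0. apply Rabs_def2 in H1. apply Rabs_def1; lra.
Qed.

Lemma cauchyL (f : R -> R) (Hc : forall x, continuous f x)
  (Hf : is_RInt_gen f (Rbar_locally m_infty) (Rbar_locally p_infty) 1) :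
  forall eps, 0 < eps -> exists N, forall u v, u < N -> v < N -> Rabs (RInt f u v) < eps.
Proof.
  intros eps He.
  destruct (full_small f Hc Hf (eps/2) ltac:(lra)) as [A [B H]].
  exists A. intros u v Hu Hv.
  pose proof (chas f Hc u v (B+1)) as E.
  pose proof (H u (B+1) Hu ltac:(lra)). pose proof (H v (B+1) Hv ltac:(lra)).
  apply Rabs_def2 in H0. apply Rabs_def2 in H1. apply Rabs_def1; lra.
Qed.

Lemma tailR (f : R -> R) (Hc : forall x, continuous f x)
  (Hf : is_RInt_gen f (Rbar_locally m_infty) (Rbar_locally p_infty) 1) t U :
  (forall b, t <= b -> RInt f t b <= U) ->
  RInt_gen f (at_point t) (Rbar_locally p_infty) <= U.
Proof.
  intros HU.
  set (F := filter_prod (at_point t) (Rbar_locally p_infty)).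
  assert (PF : ProperFilter F).
  { apply filter_prod_proper; try apply at_point_filter; try apply Rbar_locally_filter. }
  destruct (proj1 (@filterlim_locally_cauchy _ R_CompleteSpace F PF (fun P => RInt f (fst P) (snd P)))) as [y Hy].
  - intros eps. destruct (cauchyR f Hc Hf eps (cond_pos eps)) as [N HN].
    exists (fun P => fst P = t /\ N < snd P). split.
    + apply Filter_prod with (fun x => x = t) (fun x => N < x). reflexivity. exists N; auto.
      intros; simpl; auto.
    + intros [u1 u2] [v1 v2] [Hu1 Hu] [Hv1 Hv]. simpl in *. subst.
      change (Rabs (RInt f t v2 - RInt f t u2) < eps).
      pose proof (chas f Hc t u2 v2). replace (RInt f t v2 - RInt f t u2) with (RInt f u2 v2) by lra.
      auto.
  - assert (Hig : is_RInt_gen f (at_point t) (Rbar_locally p_infty) y).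
    { intros P HP. specialize (Hy P HP). unfold filtermapi, filtermap in *. revert Hy. apply filter_imp.
      intros x Hx. exists (RInt f (fst x) (snd x)). split; auto. apply (@RInt_correct R_CompleteNormedModule), exRI; auto. }
    rewrite (is_RInt_gen_unique _ _ Hig).
    apply Rnot_lt_le; intro Hlt.
    assert (Hb := Hy _ (locally_ball y (mkposreal (y - U) ltac:(lra)))).
    destruct Hb as [Q R' HQ [M HM] HQR].
    assert (HM1 : M < Rmax t M + 1) by (pose proof (Rmax_r t M); lra). specialize (HQR t (Rmax t M + 1) HQ (HM _ HM1)).
    change (Rabs (RInt f t (Rmax t M + 1) - y) < y - U) in HQR.
    specialize (HU (Rmax t M + 1) ltac:(pose proof (Rmax_l t M); lra)).
    apply Rabs_def2 in HQR. lra.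
Qed.

Lemma tailL (f : R -> R) (Hc : forall x, continuous f x)
  (Hf : is_RInt_gen f (Rbar_locally m_infty) (Rbar_locally p_infty) 1) t U :
  (forall b, b <= t -> RInt f b t <= U) ->
  RInt_gen f (Rbar_locally m_infty) (at_point t) <= U.
Proof.
  intros HU.
  set (F := filter_prod (Rbar_locally m_infty) (at_point t)).
  assert (PF : ProperFilter F).
  { apply filter_prod_proper; try apply at_point_filter; try apply Rbar_locally_filter. }
  destruct (proj1 (@filterlim_locally_cauchy _ R_CompleteSpace F PF (fun P => RInt f (fst P) (snd P)))) as [y Hy].
  - intros eps. destruct (cauchyL f Hc Hf eps (cond_pos eps)) as [N HN].
    exists (fun P => N > fst P /\ snd P = t). split.
    + apply Filter_prod with (fun x => N > x) (fun x => x = t). exists N; auto. reflexivity.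
      intros; simpl; auto.
    + intros [u1 u2] [v1 v2] [Hu Hu1] [Hv Hv1]. simpl in *. subst.
      change (Rabs (RInt f v1 t - RInt f u1 t) < eps).
      pose proof (chas f Hc u1 v1 t). replace (RInt f v1 t - RInt f u1 t) with (- RInt f u1 v1) by lra.
      rewrite Rabs_Ropp. auto.
  - assert (Hig : is_RInt_gen f (Rbar_locally m_infty) (at_point t) y).
    { intros P HP. specialize (Hy P HP). unfold filtermapi, filtermap in *. revert Hy. apply filter_imp.
      intros x Hx. exists (RInt f (fst x) (snd x)). split; auto. apply (@RInt_correct R_CompleteNormedModule), exRI; auto. }
    rewrite (is_RInt_gen_unique _ _ Hig).
    apply Rnot_lt_le; intro Hlt.
    assert (Hb := Hy _ (locally_ball y (mkposreal (y - U) ltac:(lra)))).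
    destruct Hb as [Q R' [M HM] HQ HQR].
    assert (HM1 : Rmin t M - 1 < M) by (pose proof (Rmin_r t M); lra). specialize (HQR (Rmin t M - 1) t (HM _ HM1) HQ).
    change (Rabs (RInt f (Rmin t M - 1) t - y) < y - U) in HQR.
    specialize (HU (Rmin t M - 1) ltac:(pose proof (Rmin_l t M); lra)).
    apply Rabs_def2 in HQR. lra.
Qed.
Lemma contf (f : R -> R) (Hp : forall x, 0 < f x)
  (Hd : forall x, ex_derive (fun y => ln (f y)) x) : forall x, continuous f x.
Proof.
  intros x. apply continuous_ext with (fun y => exp (ln (f y))).
  intros; apply exp_ln; auto.
  apply continuous_comp with (g := exp). apply (@ex_derive_continuous R_AbsRing R_NormedModule); auto.
  apply (@ex_derive_continuous R_AbsRing R_NormedModule). auto_derive. auto.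
Qed.

Lemma mvt_up (L : R -> R) (Hd : forall x, ex_derive L x) a b m :
  a <= b -> (forall x, a <= x <= b -> Derive L x <= m) -> L b - L a <= m * (b - a).
Proof.
  intros Hab H.
  destruct (MVT_gen L a b (Derive L)) as [c0 [Hc0 E]].
  - intros; apply Derive_correct; auto.
  - intros; apply continuity_pt_filterlim, (@ex_derive_continuous R_AbsRing R_NormedModule); auto.
  - rewrite Rmin_left in Hc0 by auto. rewrite Rmax_right in Hc0 by auto.
    rewrite E. apply Rmult_le_compat_r. lra. auto.
Qed.

Lemma mvt_low (L : R -> R) (Hd : forall x, ex_derive L x) a b m :
  a <= b -> (forall x, a <= x <= b -> m <= Derive L x) -> m * (b - a) <= L b - L a.
Proof.
  intros Hab H.
  destruct (MVT_gen L a b (Derive L)) as [c0 [Hc0 E]].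
  - intros; apply Derive_correct; auto.
  - intros; apply continuity_pt_filterlim, (@ex_derive_continuous R_AbsRing R_NormedModule); auto.
  - rewrite Rmin_left in Hc0 by auto. rewrite Rmax_right in Hc0 by auto.
    rewrite E. apply Rmult_le_compat_r. lra. auto.
Qed.

Lemma Rpower_ge1 x q : 1 <= x -> 0 <= q -> 1 <= Rpower x q.
Proof.
  intros. replace 1 with (Rpower 1 q) at 1.
  apply Rle_Rpower_l; lra.
  unfold Rpower. rewrite ln_1, Rmult_0_r, exp_0. auto.
Qed.

Lemma exp_le_exp' x y : x <= y -> exp x <= exp y.
Proof. intros [H|H]. left; apply exp_increasing; auto. subst; lra. Qed.

Lemma core (f : R -> R) (Hp : forall x, 0 < f x)
  (Hd : forall x, ex_derive (fun y => ln (f y)) x)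
  (HDc : forall x, continuous (Derive (fun y => ln (f y))) x)
  (Hb : forall a b, a <= b -> RInt f a b <= 2)
  (q c M : R) (Hq : 0 <= q) (Hc : 0 < c)
  (HM : forall x, M < x -> c * Rpower x q <= Rabs (Derive (fun y => ln (f y)) x)) :
  exists a K T, 0 < a /\ forall t, T <= t -> forall b, t <= b ->
     RInt f t b <= K * exp (- a * Rpower t (1 + q)).
Proof.
  set (L := fun y => ln (f y)) in *.
  set (D := Derive L) in *.
  assert (Hcf := contf f Hp Hd).
  assert (fL : forall x, f x = exp (L x)) by (intros; unfold L; rewrite exp_ln; auto).
  set (M1 := Rmax M 1).
  assert (HM1 : M <= M1 /\ 1 <= M1) by (split; [apply Rmax_l | apply Rmax_r]).
  assert (nz : forall y, M1 < y -> D y <> 0).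
  { intros y Hy E. specialize (HM y ltac:(lra)). fold D in HM. rewrite E, Rabs_R0 in HM.
    assert (0 < Rpower y q) by (unfold Rpower; apply exp_pos).
    assert (0 < c * Rpower y q) by (apply Rmult_lt_0_compat; auto). lra. }
  assert (neg : forall x, M1 < x -> D x < 0).
  { intros x Hx. destruct (Rtotal_order (D x) 0) as [H|[H|H]]; auto.
    - exfalso; apply (nz x Hx H).
    - exfalso.
      assert (pos : forall y, M1 < y -> 0 < D y).
      { intros y Hy. destruct (Rtotal_order (D y) 0) as [H1|[H1|H1]]; auto.
        - exfalso.
          destruct (IVT_gen D x y 0) as [z [Hz Ez]].
          + intros z. apply continuity_pt_filterlim. apply HDc.
          + split. apply Rle_trans with (D y). apply Rmin_r. lra.
            apply Rle_trans with (D x). lra. apply Rmax_l.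
          + apply (nz z); auto. assert (M1 < Rmin x y) by (apply Rmin_glb_lt; auto). lra.
        - exfalso; apply (nz y Hy H1). }
      assert (inc : forall y, x <= y -> f x <= f y).
      { intros y Hy. rewrite !fL. apply exp_le_exp'.
        assert (0 * (y - x) <= L y - L x). apply mvt_low; auto.
        intros z Hz. left. apply pos. lra. lra. }
      set (b := x + 3 / f x).
      assert (Hfx := Hp x).
      assert (Hxb : x <= b). { unfold b. assert (0 < 3 / f x) by (apply Rdiv_lt_0_compat; lra). lra. }
      assert (RInt (fun _ => f x) x b <= RInt f x b).
      { apply RInt_le; auto. apply ex_RInt_const. apply exRI; auto.
        intros z Hz. apply inc. lra. }
      rewrite RInt_const in H0. change (scal (b - x) (f x)) with ((b - x) * f x) in H0.
      replace ((b - x) * f x) with 3 in H0 by (unfold b; field; lra).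
      specialize (Hb x b Hxb). lra. }
  assert (Dle : forall s x, M1 < s -> s <= x -> D x <= - c * Rpower s q).
  { intros s x Hs Hsx. specialize (HM x ltac:(lra)). fold D in HM.
    specialize (neg x ltac:(lra)). rewrite Rabs_left in HM by auto.
    assert (Rpower s q <= Rpower x q) by (apply Rle_Rpower_l; lra). nra. }
  set (a := c * Rpower (/2) (1 + q)).
  set (L0 := L (M1 + 1)).
  exists a, (exp L0 / c), (2 * (M1 + 1)). split.
  { unfold a. apply Rmult_lt_0_compat; auto. unfold Rpower; apply exp_pos. }
  intros t Ht b Htb.
  set (s := t / 2).
  assert (i : L s - L (M1 + 1) <= 0 * (s - (M1 + 1))).
  { apply mvt_up; auto. unfold s; lra. intros x Hx. left. apply neg. lra. }
  assert (ii : L t - L s <= (- c * Rpower s q) * (t - s)).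
  { apply mvt_up; auto. unfold s; lra. intros x Hx. apply Dle; unfold s in *; lra. }
  assert (iii : Rpower s q * (t - s) = Rpower (/2) (1 + q) * Rpower t (1 + q)).
  { replace (t - s) with s by (unfold s; field).
    assert (0 < s) by (unfold s; lra).
    rewrite <- (Rpower_1 s) at 2 by auto. rewrite <- Rpower_plus.
    rewrite Rpower_mult_distr by lra. replace (q + 1) with (1 + q) by ring. unfold s. f_equal. field. }
  set (E := exp (L0 - a * Rpower t (1 + q))).
  assert (iv : forall x, t <= x -> f x <= E * exp (- c * (x - t))).
  { intros x Hx. rewrite fL. unfold E. rewrite <- exp_plus. apply exp_le_exp'.
    assert (v : L x - L t <= (- c * Rpower t q) * (x - t)).
    { apply mvt_up; auto. intros y Hy. apply Dle; lra. }
    assert (1 <= Rpower t q) by (apply Rpower_ge1; lra).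
    assert (c * (x - t) <= c * Rpower t q * (x - t)).
    { apply Rmult_le_compat_r. lra. rewrite <- (Rmult_1_r c) at 1. apply Rmult_le_compat_l; lra. }
    assert (a * Rpower t (1+q) = c * (Rpower s q * (t - s))) by (unfold a; rewrite iii; ring).
    unfold L0 in *. nra. }
  assert (Hg : forall x, continuous (fun x => E * exp (- c * (x - t))) x).
  { intros x. apply (@ex_derive_continuous R_AbsRing R_NormedModule). auto_derive. auto. }
  assert (Hint : is_RInt (fun x => E * exp (- c * (x - t))) t b
             (minus ((fun x => - E / c * exp (- c * (x - t))) b) ((fun x => - E / c * exp (- c * (x - t))) t))).
  { apply (@is_RInt_derive R_CompleteNormedModule (fun x => - E / c * exp (- c * (x - t)))).
    - intros x _. auto_derive. auto. replace (x + - t) with (x - t) by ring. set (ee := exp (- c * (x - t))). clearbody E. field. lra.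
    - intros x _. apply Hg. }
  apply Rle_trans with (RInt (fun x => E * exp (- c * (x - t))) t b).
  { apply RInt_le; auto. apply exRI; auto. apply exRI; auto. intros x Hx. apply iv. lra. }
  rewrite (is_RInt_unique _ _ _ _ Hint). simpl.
  change (minus ?u ?v) with (u - v).
  replace (t - t) with 0 by ring. rewrite Rmult_0_r, exp_0.
  assert (0 < exp (- c * (b - t))) by apply exp_pos.
  assert (0 < E) by apply exp_pos.
  assert (E / c * exp (- c * (b - t)) >= 0).
  { apply Rle_ge. apply Rmult_le_pos; [|lra]. apply Rmult_le_pos. lra. left; apply Rinv_0_lt_compat; auto. }
  replace (exp L0 / c * exp (- a * Rpower t (1 + q))) with (E / c).
  { replace (- E / c * exp (- c * (b - t)) - - E / c * 1) with (E / c - E / c * exp (- c * (b - t))) by (field; lra). lra. }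
  unfold E. replace (L0 - a * Rpower t (1 + q)) with (L0 + - a * Rpower t (1 + q)) by ring.
  rewrite exp_plus. field. lra.
Qed.

Lemma RInt_refl (f : R -> R) (Hc : forall x, continuous f x) a b :
  RInt (fun y => f (- y)) a b = RInt f (- b) (- a).
Proof.
  rewrite <- (@opp_RInt_swap R_CompleteNormedModule). 2: (apply exRI; auto).
  replace (- a) with (-1 * a + 0) by ring. replace (- b) with (-1 * b + 0) by ring.
  rewrite <- (@RInt_comp_lin R_CompleteNormedModule). 2: (apply exRI; auto).
  rewrite <- (@RInt_opp R_CompleteNormedModule).
  2: { apply (@ex_RInt_continuous R_CompleteNormedModule). intros. apply continuous_comp with (g := f).
       apply (@ex_derive_continuous R_AbsRing R_NormedModule). auto_derive. auto. apply Hc. }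
  apply RInt_ext. intros x _. change (- f (- x) = -1 * f (-1 * x + 0)).
  replace (-1 * x + 0) with (- x) by ring. ring.
  intros x. apply continuous_comp with (g := f).
  apply (@ex_derive_continuous R_AbsRing R_NormedModule). auto_derive. auto. apply Hc.
Qed.

Lemma Dopp x : Derive (fun y : R => - y) x = -1.
Proof. apply is_derive_unique. auto_derive; auto. Qed.

Theorem lemma6 (pi1 : R -> R) (q k : R) :
  (forall x, 0 < pi1 x) ->
  is_prob_density pi1 ->
  (* log pi1 is C^1 on R *)
  (forall x, ex_derive (fun y => ln (pi1 y)) x) ->
  (forall x, continuous (Derive (fun y => ln (pi1 y))) x) ->
  0 <= q < 1 ->
  (* |(log pi1)'(x)| = Theta(|x|^q) as |x| -> oo *)
  (exists c C M : R, 0 < c /\ 0 < C /\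
     forall x, M < Rabs x ->
       c * Rpower (Rabs x) q <= Rabs (Derive (fun y => ln (pi1 y)) x) <=
       C * Rpower (Rabs x) q) ->
  0 <= k ->
  exists gamma : R, 0 < gamma /\
    exists B H : R, forall h, H < h ->
      abs_tail_prob pi1 (k + h) * exp (gamma * Rpower h (1 + q) + q * ln h) <= B.
Proof.
  intros Hp Hf Hd HDc Hq [c [C [M [Hc [HC HM]]]]] Hk.
  unfold is_prob_density in Hf.
  assert (Hcf := contf pi1 Hp Hd).
  assert (Hb := BND pi1 Hcf Hp Hf).
  set (M' := Rmax M 0).
  assert (HM' : M <= M' /\ 0 <= M') by (split; [apply Rmax_l | apply Rmax_r]).
  destruct (core pi1 Hp Hd HDc Hb q c M' ltac:(lra) Hc) as [a1 [K1 [T1 [Ha1 H1]]]].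
  { intros x Hx. rewrite <- (Rabs_right x) at 1 by lra. apply HM. rewrite Rabs_right; lra. }
  set (g := fun x => pi1 (- x)).
  assert (Hpg : forall x, 0 < g x) by (intros; apply Hp).
  assert (Hdg : forall x, ex_derive (fun y => ln (g y)) x).
  { intros x. unfold g. apply (ex_derive_comp (fun y => ln (pi1 y)) (fun y => - y)). apply Hd.
    auto_derive; auto. }
  assert (DG : forall x, Derive (fun y => ln (g y)) x = - Derive (fun y => ln (pi1 y)) (- x)).
  { intros x. unfold g. rewrite (Derive_comp (fun y => ln (pi1 y)) (fun y => - y)).
    rewrite Dopp. ring. apply Hd. auto_derive; auto. }
  assert (HDcg : forall x, continuous (Derive (fun y => ln (g y))) x).
  { intros x. apply continuous_ext with (fun x => opp (Derive (fun y => ln (pi1 y)) (- x))).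
    intros; rewrite DG; reflexivity.
    apply (@continuous_opp R_UniformSpace R_AbsRing R_NormedModule (fun x => Derive (fun y => ln (pi1 y)) (- x))).
    apply (@continuous_comp R_UniformSpace R_UniformSpace R_UniformSpace (fun y => - y) (Derive (fun y => ln (pi1 y)))).
    apply (@ex_derive_continuous R_AbsRing R_NormedModule). auto_derive. auto. apply HDc. }
  assert (Hcg : forall x, continuous g x) by (apply contf; auto).
  assert (Hbg : forall a b, a <= b -> RInt g a b <= 2).
  { intros a b Hab. unfold g. rewrite RInt_refl by auto. apply Hb. lra. }
  destruct (core g Hpg Hdg HDcg Hbg q c M' ltac:(lra) Hc) as [a2 [K2 [T2 [Ha2 H2]]]].
  { intros x Hx. rewrite DG, Rabs_Ropp. replace x with (Rabs (- x)) at 1.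
    apply HM. rewrite Rabs_left; lra. rewrite Rabs_left; lra. }
  set (a0 := Rmin a1 a2).
  assert (Ha0 : 0 < a0) by (apply Rmin_glb_lt; auto).
  set (Kt := Rabs K1 + Rabs K2).
  exists (a0 / 2). split. lra.
  exists (Kt * (2 / a0)), (Rmax (Rmax T1 T2) 1).
  intros h Hh.
  assert (HT1 : T1 <= Rmax (Rmax T1 T2) 1) by (eapply Rle_trans; [apply Rmax_l|apply Rmax_l]).
  assert (HT2 : T2 <= Rmax (Rmax T1 T2) 1) by (eapply Rle_trans; [apply Rmax_r|apply Rmax_l]).
  assert (HT3 : 1 <= Rmax (Rmax T1 T2) 1) by apply Rmax_r.
  set (t := k + h).
  assert (Rh : h <= Rpower h (1 + q)).
  { rewrite <- (Rpower_1 h) at 1 by lra. apply Rle_Rpower; lra. }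
  assert (Rt : Rpower h (1 + q) <= Rpower t (1 + q)).
  { apply Rle_Rpower_l. lra. unfold t; lra. }
  set (Rh1 := Rpower h (1 + q)) in *.
  set (Rt1 := Rpower t (1 + q)) in *.
  assert (Ebound : forall K a, a0 <= a -> K * exp (- a * Rt1) <= Rabs K * exp (- a0 * Rh1)).
  { intros K a Ha. apply Rle_trans with (Rabs K * exp (- a * Rt1)).
    apply Rmult_le_compat_r. left; apply exp_pos. apply Rle_abs.
    apply Rmult_le_compat_l. apply Rabs_pos. apply exp_le_exp'. nra. }
  assert (Htail : abs_tail_prob pi1 t <= Kt * exp (- a0 * Rh1)).
  { unfold abs_tail_prob, Kt. rewrite Rmult_plus_distr_r.
    apply Rplus_le_compat.
    - apply tailR; auto. intros b Hbt.
      eapply Rle_trans. apply H1. unfold t; lra. auto. apply Ebound. apply Rmin_l.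
    - apply tailL; auto. intros b Hbt.
      replace (RInt pi1 b (- t)) with (RInt g t (- b)).
      eapply Rle_trans. apply H2. unfold t; lra. lra. apply Ebound. apply Rmin_r.
      unfold g. rewrite RInt_refl by auto. f_equal; ring. }
  assert (hpos : 1 < h) by lra.
  assert (lnh : 0 < ln h) by (rewrite <- ln_1; apply ln_increasing; lra).
  assert (Eb : exp (- a0 * Rh1) * exp (a0 / 2 * Rh1 + q * ln h) <= 2 / a0).
  { rewrite <- exp_plus.
    assert (E1 : exp (- a0 * Rh1 + (a0 / 2 * Rh1 + q * ln h)) <= h * / exp (a0 / 2 * h)).
    { replace (h * / exp (a0 / 2 * h)) with (exp (ln h + - (a0 / 2 * h))).
      apply exp_le_exp'. nra. rewrite exp_plus, exp_ln, exp_Ropp by lra. reflexivity. }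
    assert (E2 := exp_ineq1_le (a0 / 2 * h)).
    set (EE := exp (a0 / 2 * h)) in *.
    assert (EEp : 0 < EE) by apply exp_pos.
    set (w := h * / EE) in *.
    assert (Ew : EE * w = h) by (unfold w; field; lra).
    assert (wp : 0 <= w) by (unfold w; apply Rmult_le_pos; [lra | left; apply Rinv_0_lt_compat; auto]).
    assert (a0 * w <= 2) by nra.
    apply Rle_trans with w; auto.
    replace w with ((a0 * w) / a0) by (field; lra).
    unfold Rdiv. apply Rmult_le_compat_r. left; apply Rinv_0_lt_compat; auto. auto. }
  eapply Rle_trans. apply Rmult_le_compat_r. left; apply exp_pos. exact Htail.
  rewrite Rmult_assoc. apply Rmult_le_compat_l.
  unfold Kt; pose proof (Rabs_pos K1); pose proof (Rabs_pos K2); lra.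
  replace (a0 / 2 * Rpower h (1 + q)) with (a0 / 2 * Rh1) by reflexivity.
  exact Eb.
Qed.
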